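(* Let $n\ge2$ and let $\beta\in D_n$ have restricted sequence $(b_n,\ldots,b_1)$. Let $1\le j\le 2n-1$ with $j\notin\{b_n-1,b_n,b_n+1\}$, and let $(b'_{n-1},\ldots,b'_1)$ be the restricted sequence of $\tau_j(\beta)\in D_{n-1}$. Then: (1) if $j<b_n-1$, then $b'_{n-1}=b_n-2$; (2) if $j>b_n+1$, then $b'_{n-1}\le b_n$.
   Context: $D_n$ is the set of non-crossing perfect matchings of $\{1,\ldots,2n\}$ (non-crossing $n$-chord diagrams), $D_0=\{\phi\}$. For $1\le k\le 2n+1$, $l_k:D_n\to D_{n+1}$: $l_k(\alpha)$ matches $k$ with $k+1$, old point $i$ becomes $i$ if $i<k$ and $i+2$ if $i\ge k$. For $1\le j\le 2n-1$, $\tau_j:D_n\to D_{n-1}$: if $j$ is matched with $j+1$, delete this pair; otherwise, if $p$ is the partner of $j$ and $p'$ the partner of $j+1$, delete the pairs $\{j,p\},\{j+1,p'\}$ and add the pair $\{p,p'\}$; then renumber the remaining $2n-2$ points order-preservingly to $\{1,\ldots,2n-2\}$. Restricted sequence of $\alpha\in D_n$: let $k_n$ be the smallest $k$ with $k$ matched to $k+1$; the sequence is $(k_n,k_{n-1},\ldots,k_1)$ where $(k_{n-1},\ldots,k_1)$ is the restricted sequence of $\alpha$ with that arc removed (empty for $\phi$). *)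

(* Defs.v *)
From mathcomp Require Import all_boot.
Set Implicit Arguments. Unset Strict Implicit. Unset Printing Implicit Defensive.

(* A chord diagram on the points {1,...,2n} is encoded by its partner
   function p : nat -> nat (only the values on 1..2n matter). *)

Definition is_perfect_matching (n : nat) (p : nat -> nat) : Prop :=
  forall i, 1 <= i <= n.*2 ->
    [/\ 1 <= p i <= n.*2, p i != i & p (p i) = i].

Definition noncrossing (n : nat) (p : nat -> nat) : Prop :=
  forall a b, 1 <= a <= n.*2 -> 1 <= b <= n.*2 ->
    ~ (a < b /\ b < p a /\ p a < p b).

Definition D (n : nat) (p : nat -> nat) : Prop :=
  is_perfect_matching n p /\ noncrossing n p.

(* tau_j : D_n -> D_{n-1}.  New point i corresponds to old point
   (if i < j then i else i+2); old point x is renumbered to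
   (if x < j then x else x-2). *)
Definition tau (j : nat) (p : nat -> nat) : nat -> nat :=
  fun i =>
    let x := if i < j then i else i.+2 in
    let y := if p j == j.+1 then p x
             else if x == p j then p j.+1
             else if x == p j.+1 then p j
             else p x in
    if y < j then y else y - 2.

Definition first_arc (n : nat) (p : nat -> nat) : nat :=
  let s := iota 1 n.*2.-1 in nth 0 s (find (fun k => p k == k.+1) s).

(* restricted sequence (k_n, k_{n-1}, ..., k_1); removing the arc {k,k+1}
   is exactly tau_k. *)
Fixpoint restricted_seq (n : nat) (p : nat -> nat) : seq nat :=
  match n with
  | 0 => [::]
  | m.+1 => let k := first_arc n p in k :: restricted_seq m (tau k p)
  end.

(* Main.v *)
Require Import Defs.
From mathcomp Require Import all_boot.
From mathcomp Require Import zify.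

Lemma first_arc_le (n : nat) (p : nat -> nat) (c : nat) :
  1 <= c <= n.*2.-1 -> p c = c.+1 ->
  let b := first_arc n p in
  [/\ 1 <= b <= c, p b = b.+1 & forall k, 1 <= k < b -> p k != k.+1].
Proof.
move=> Hc Hpc /=; rewrite /first_arc.
set s := iota 1 n.*2.-1; set P := (fun k => p k == k.+1).
have Hs : size s = n.*2.-1 by rewrite size_iota.
have Hhas : has P s.
  apply/hasP; exists c; last by rewrite /P /= Hpc.
  by rewrite mem_iota; lia.
have Hi := Hhas; rewrite has_find Hs in Hi.
have Hnth : nth 0 s (find P s) = (find P s).+1.
  by rewrite nth_iota ?add1n //.
rewrite Hnth.
have Hle : find P s < c.
  case: (ltnP (find P s) c) => // H.
  have Hc1 : c.-1 < find P s by lia.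
  have := before_find 0 Hc1.
  rewrite nth_iota; last lia.
  rewrite add1n /P /= prednK; last lia.
  by rewrite Hpc eqxx.
split.
- lia.
- have := nth_find 0 Hhas; rewrite Hnth /P => /eqP //.
- move=> k Hk.
  have Hk1 : k.-1 < find P s by lia.
  have := before_find 0 Hk1.
  rewrite nth_iota; last lia.
  rewrite add1n /P /= prednK //; lia.
Qed.

Lemma exists_short (n : nat) (p : nat -> nat) :
  D n p -> forall a, 1 <= a <= n.*2 -> a < p a ->
  exists k, a <= k < p a /\ p k = k.+1.
Proof.
move=> [Hpm Hnc] a.
move Hd: (p a - a) => d.
elim: d {-2}d (leqnn d) a Hd => [|d IH] d' Hd' a Hd Ha Hlt.
  lia.
case: (eqVneq (p a) a.+1) => Hpa.
  exists a; split => //; lia.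
have [Hr Hne Hi] := Hpm a Ha.
have Ha1 : 1 <= a.+1 <= n.*2 by lia.
have [Hr1 Hne1 Hi1] := Hpm _ Ha1.
have Hnc1 := Hnc a a.+1 Ha Ha1.
case: (ltnP (p a.+1) a.+1) => Hq.
  have Hqa : p a.+1 != a.
    by apply/eqP => E; move: Hpa; rewrite -{1}E Hi1 eqxx.
  have Hq' := Hpm _ Hr1.
  have := Hnc (p a.+1) a Hr1 Ha.
  rewrite Hi1. lia.
have Hqpa : p a.+1 != p a.
  by apply/eqP => E; move: Hi1; rewrite E Hi; lia.
have [k [Hk1 Hk2]] : exists k, a.+1 <= k < p a.+1 /\ p k = k.+1.
  apply: (IH (p a.+1 - a.+1)) => //; lia.
exists k; split => //; lia.
Qed.

Lemma D_inj (n : nat) (p : nat -> nat) x y :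
  D n p -> 1 <= x <= n.*2 -> 1 <= y <= n.*2 -> p x = p y -> x = y.
Proof.
move=> [Hpm _] Hx Hy E.
have [_ _ Hx'] := Hpm x Hx; have [_ _ Hy'] := Hpm y Hy.
by rewrite -Hx' E Hy'.
Qed.

Lemma tau_no_short (n : nat) (beta : nat -> nat) (b j k : nat) :
  D n beta ->
  (forall k, 1 <= k < b -> beta k != k.+1) ->
  1 <= j -> j.+2 <= b -> b <= n.*2.-1 ->
  1 <= k -> k.+2 < b -> tau j beta k != k.+1.
Proof.
move=> HD Hmin Hj1 Hjb Hbn Hk1 Hkb.
have [Hpm Hnc] := HD.
have F : forall a, 1 <= a <= n.*2 -> a < beta a -> b < beta a.
  move=> a Ha Hlt.
  have [k' [Hk' Hk'']] := @exists_short n beta HD a Ha Hlt.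
  case: (ltnP b (beta a)) => // Hle.
  have := Hmin k'. rewrite Hk'' eqxx. move=> /(_ ltac:(lia)) //.
have Hjr : 1 <= j <= n.*2 by lia.
have Hj1r : 1 <= j.+1 <= n.*2 by lia.
have Hjj : beta j != j.+1 by apply: Hmin; lia.
have [HrP HneP HiP] := Hpm j Hjr.
have [HrP' HneP' HiP'] := Hpm j.+1 Hj1r.
set P := beta j in HrP HneP HiP Hjj *.
set P' := beta j.+1 in HrP' HneP' HiP' *.
have HP'j : P' != j.
  by apply/eqP => E; move/eqP: Hjj; apply; rewrite /P -{1}E HiP'.
have HPb : b < P.
  case: (ltnP P j) => H.
    have := F P HrP; rewrite HiP; lia.
  by apply: F => //; lia.
have HP'b : b < P'.
  case: (ltnP P' j.+1) => H.
    have := F P' HrP'; rewrite HiP'; lia.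
  by apply: F => //; lia.
rewrite /tau (negbTE Hjj) -/P -/P'.
case Hkj: (k < j).
- have Hx1 : (k == P) = false by apply/eqP; lia.
  have Hx2 : (k == P') = false by apply/eqP; lia.
  rewrite Hx1 Hx2.
  have Hkr : 1 <= k <= n.*2 by lia.
  have [Hrk Hnek Hik] := Hpm k Hkr.
  have Hm := Hmin k ltac:(lia).
  have Hn1 : beta k != j.
    by apply/eqP => E; move/negbT/eqP: Hx1; apply; rewrite -Hik E.
  have Hn2 : beta k != j.+1.
    by apply/eqP => E; move/negbT/eqP: Hx2; apply; rewrite -Hik E.
  have Hn3 : beta k != P.
    apply/eqP => E; have : k = j by rewrite -Hik E HiP.
    lia.
  have Hnc1 := Hnc k j Hkr Hjr.
  rewrite -/P in Hnc1.
  case: ifP => Hif; lia.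
- have Hx1 : (k.+2 == P) = false by apply/eqP; lia.
  have Hx2 : (k.+2 == P') = false by apply/eqP; lia.
  rewrite Hx1 Hx2.
  have Hkr : 1 <= k.+2 <= n.*2 by lia.
  have [Hrk Hnek Hik] := Hpm k.+2 Hkr.
  have Hm := Hmin k.+2 ltac:(lia).
  have Hn1 : beta k.+2 != j.
    by apply/eqP => E; move/negbT/eqP: Hx1; apply; rewrite -Hik E.
  have Hn2 : beta k.+2 != j.+1.
    by apply/eqP => E; move/negbT/eqP: Hx2; apply; rewrite -Hik E.
  case: ifP => Hif; lia.
Qed.

Theorem mainTheorem4 (n : nat) (beta : nat -> nat) (j : nat) :
  2 <= n -> D n beta ->
  1 <= j <= n.*2.-1 ->
  j \notin [:: (nth 0 (restricted_seq n beta) 0).-1;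
               nth 0 (restricted_seq n beta) 0;
               (nth 0 (restricted_seq n beta) 0).+1] ->
  let b_n := nth 0 (restricted_seq n beta) 0 in
  let b'_n1 := nth 0 (restricted_seq n.-1 (tau j beta)) 0 in
  (j < b_n.-1 -> b'_n1 = b_n - 2) /\
  (b_n.+1 < j -> b'_n1 <= b_n).
Proof.
move=> Hn HD Hj.
have -> : nth 0 (restricted_seq n beta) 0 = first_arc n beta.
  by case: n Hn {Hj HD}.
have -> : nth 0 (restricted_seq n.-1 (tau j beta)) 0 = first_arc n.-1 (tau j beta).
  by case: n Hn {Hj HD} => [|[|m]].
move=> Hnot b_n b'_n1; rewrite /b_n /b'_n1 {b_n b'_n1}.
rewrite !inE in Hnot.
have [Hpm Hnc] := HD.
have H1r : 1 <= 1 <= n.*2 by lia.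
have [Hr1 Hne1 _] := Hpm 1 H1r.
have [k0 [Hk0 Hk0']] := @exists_short n beta HD 1 H1r ltac:(lia).
have [Hb Hbb Hmin] := @first_arc_le n beta k0 ltac:(lia) Hk0'.
set b := first_arc n beta in Hb Hbb Hmin Hnot *.
have Hbr : 1 <= b <= n.*2 by lia.
have Hjr : 1 <= j <= n.*2 by lia.
have Hj1r : 1 <= j.+1 <= n.*2 by lia.
split => Hjb.
- have Hc : 1 <= b - 2 <= (n.-1).*2.-1 by lia.
  have Htb : tau j beta (b - 2) = (b - 2).+1.
    have Hjj : beta j != j.+1 by apply: Hmin; lia.
    have [HrP HneP HiP] := Hpm j Hjr.
    have [HrP' HneP' HiP'] := Hpm j.+1 Hj1r.
    rewrite /tau (negbTE Hjj).
    have -> : (b - 2 < j) = false by apply/negbTE; lia.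
    have -> : (b - 2).+2 = b by lia.
    have -> : (b == beta j) = false.
      apply/negbTE/eqP => E; have : beta b = j by rewrite E HiP.
      lia.
    have -> : (b == beta j.+1) = false.
      apply/negbTE/eqP => E; have : beta b = j.+1 by rewrite E HiP'.
      lia.
    rewrite Hbb.
    have -> : (b.+1 < j) = false by apply/negbTE; lia.
    lia.
  have [Hf1 Hf2 Hf3] := @first_arc_le n.-1 (tau j beta) (b - 2) Hc Htb.
  set f := first_arc n.-1 (tau j beta) in Hf1 Hf2 Hf3 *.
  case: (ltnP f (b - 2)) => Hlt; last lia.
  have := @tau_no_short n beta b j f HD Hmin ltac:(lia) ltac:(lia) ltac:(lia)
     ltac:(lia) ltac:(lia).
  by rewrite Hf2 eqxx.
- have Hc : 1 <= b <= (n.-1).*2.-1 by lia.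
  have Htb : tau j beta b = b.+1.
    have [HrP HneP HiP] := Hpm j Hjr.
    have [HrP' HneP' HiP'] := Hpm j.+1 Hj1r.
    rewrite /tau.
    have -> : (b < j) = true by lia.
    have -> : (b == beta j) = false.
      apply/negbTE/eqP => E; have : beta b = j by rewrite E HiP.
      lia.
    have -> : (b == beta j.+1) = false.
      apply/negbTE/eqP => E; have : beta b = j.+1 by rewrite E HiP'.
      lia.
    rewrite Hbb.
    by case: (beta j == j.+1); rewrite Hjb.
  have [Hf1 Hf2 Hf3] := @first_arc_le n.-1 (tau j beta) b Hc Htb.
  lia.
Qed.
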